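(* Let $V$ be a real vector space of dimension $n$, $L\subset V$ a lattice of rank $n$, $P$ an $n$-dimensional convex polytope with vertices in $L$, and $E(t)$ its Ehrhart polynomial. Let $p$ be a prime and $1\le k\le n-1$. Then \[ T(p,k)E(t)=G_{k-1,n-1}E(pt)+(G_{k,n}-G_{k-1,n-1})E(t). \] In particular, for every $0\le l\le n$, \[ c_l(T(p,k)E)=\bigl(G_{k,n}+(p^l-1)G_{k-1,n-1}\bigr)c_l(E). \]
   Context: The Ehrhart polynomial of a polytope $Q$ with vertices in a lattice $N$ is the polynomial $E_N(Q)(t)=\#(tQ\cap N)$, $t\in\mathbb{Z}_{\ge0}$; $E=E_L(P)$. $c_l(f)$ is the coefficient of $t^l$ in $f\in\mathbb{Q}[t]$. $\mathscr{L}_k$ is the set of lattices $M$ with $L\subsetneq M\subsetneq p^{-1}L$ and $\dim_{\mathbb{F}_p}(M/L)=k$, and $T(p,k)E=\sum_{M\in\mathscr{L}_k}E_M(P)$. $G_{a,b}$ is the number of $a$-dimensional subspaces of $\mathbb{F}_p^b$, i.e. $G_{a,b}=\frac{[b]!}{[a]![b-a]!}$ with $[m]=(p^m-1)/(p-1)$ and $[m]!=\prod_{i=1}^m[i]$. *)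

(* Defs.v *)
From HB Require Import structures.
From mathcomp Require Import all_boot all_order all_algebra.
From mathcomp Require Import boolp classical_sets fsbigop reals.
Set Implicit Arguments. Unset Strict Implicit. Unset Printing Implicit Defensive.
Import Order.TTheory GRing.Theory Num.Theory.
Local Open Scope classical_set_scope.
Local Open Scope ring_scope.

Definition lattice_of (R : realType) (n : nat) (B : 'M[R]_n) : set 'rV[R]_n :=
  [set x | exists z : 'rV[int]_n, x = map_mx (fun a : int => a%:~R) z *m B].

Definition is_lattice (R : realType) (n : nat) (M : set 'rV[R]_n) : Prop :=
  exists B : 'M[R]_n, B \in unitmx /\ M = lattice_of B.

Definition lat_div (R : realType) (n : nat) (p : nat) (L : set 'rV[R]_n)
  : set 'rV[R]_n := [set x | L (p%:R *: x)].

(* dim_{F_p}(M/L) = k, for L ⊆ M ⊆ p^{-1}L (so M/L is an F_p-vector space):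
   there are x_1..x_k in M whose classes form an F_p-basis of M/L, i.e. every
   m in M is congruent mod L to  sum_i a_i x_i  for a unique a in F_p^k
   (elements of F_p represented by 0..p-1). *)
Definition quot_dim (R : realType) (n : nat) (p : nat) (M L : set 'rV[R]_n)
  (k : nat) : Prop :=
  exists x : 'I_k -> 'rV[R]_n, (forall i, M (x i)) /\
    forall m, M m ->
      exists! a : {ffun 'I_k -> 'I_p},
        L (m - \sum_(i < k) ((a i : nat)%:R *: x i)).

Definition Lk (R : realType) (n : nat) (p k : nat) (L : set 'rV[R]_n)
  : set (set 'rV[R]_n) :=
  [set M | [/\ is_lattice M, L `<` M, M `<` lat_div p L & quot_dim p M L k]].

Definition conv (R : realType) (n : nat) (vs : seq 'rV[R]_n) : set 'rV[R]_n :=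
  [set x | exists w : 'I_(size vs) -> R,
     [/\ forall i, 0 <= w i, \sum_i w i = 1 &
         x = \sum_i w i *: nth 0 vs i]].

Definition dilate (R : realType) (n : nat) (t : nat) (Q : set 'rV[R]_n)
  : set 'rV[R]_n := [set t%:R *: x | x in Q].

Definition is_ehrhart (R : realType) (n : nat) (N Q : set 'rV[R]_n)
  (f : {poly R}) : Prop :=
  forall t : nat, exists s : seq 'rV[R]_n,
    [/\ uniq s, forall x, x \in s <-> (dilate t Q `&` N) x
      & f.[t%:R] = (size s)%:R].

(* q-integers at q = p: [m] = (p^m-1)/(p-1) = sum_{i<m} p^i, [m]! *)
Definition qint (p m : nat) : nat := \sum_(i < m) p ^ i.
Definition qfact (p m : nat) : nat := \prod_(1 <= i < m.+1) qint p i.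
(* G_{a,b} = [b]! / ([a]! [b-a]!)  (number of a-dim subspaces of F_p^b) *)
Definition gauss_binom (p a b : nat) : nat :=
  (qfact p b %/ (qfact p a * qfact p (b - a)))%N.

(* Main.v *)
Require Import Defs.
From HB Require Import structures.
From mathcomp Require Import all_boot all_order all_algebra all_field zify.
From mathcomp Require Import boolp classical_sets fsbigop reals.
From mathcomp.algebra_tactics Require Import ring.
Set Implicit Arguments. Unset Strict Implicit. Unset Printing Implicit Defensive.
Import Order.TTheory GRing.Theory Num.Theory.
Local Open Scope classical_set_scope.
Local Open Scope ring_scope.

Local Close Scope ring_scope. Local Close Scope classical_set_scope.
Lemma qint_gt0 q i : (0 < i)%N -> (0 < qint q i)%N.
Proof.
case: i => // i _; rewrite /qint big_ord_recl expn0.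
by rewrite add1n ltnS.
Qed.

Lemma qfact_gt0 q n : (0 < qfact q n)%N.
Proof.
rewrite /qfact big_seq; elim/big_ind: _ => // [x y|i]; first by rewrite muln_gt0 => ->.
by rewrite mem_index_iota => /andP[h _]; apply: qint_gt0.
Qed.

Lemma qfactS q n : qfact q n.+1 = (qfact q n * qint q n.+1)%N.
Proof. by rewrite /qfact big_nat_recr. Qed.

Lemma qfact_split q n k : (k <= n)%N ->
  qfact q n = (\prod_(i < k) qint q (n - i) * qfact q (n - k))%N.
Proof.
elim: k => [|k IH] lekn; first by rewrite big_ord0 mul1n subn0.
rewrite IH ?(ltnW lekn) // big_ord_recr /= -mulnA; congr (_ * _)%N.
have -> : (n - k = (n - k.+1).+1)%N by lia.
by rewrite qfactS mulnC.
Qed.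

Lemma pow_sub q a i : (0 < q)%N -> (i <= a)%N ->
  (q ^ a - q ^ i = q ^ i * q.-1 * qint q (a - i))%N.
Proof.
move=> q0 le; rewrite -mulnA /qint -predn_exp -subn1 mulnBr muln1 -expnD subnKC //.
Qed.

Lemma prod_pow_sub q a k : (0 < q)%N -> (k <= a)%N ->
  (\prod_(i < k) (q ^ a - q ^ i) =
   (\prod_(i < k) (q ^ i * q.-1)) * \prod_(i < k) qint q (a - i))%N.
Proof.
move=> q0 le; rewrite -big_split /=; apply: eq_bigr => i _.
by rewrite pow_sub // (leq_trans (ltnW (ltn_ord i))).
Qed.

Lemma gauss_eq q k n N : (1 < q)%N -> (k <= n)%N ->
  (N * \prod_(i < k) (q ^ k - q ^ i))%N = (\prod_(i < k) (q ^ n - q ^ i))%N ->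
  N = gauss_binom q k n.
Proof.
move=> q1 le; have q0 : (0 < q)%N by apply: ltnW.
rewrite !prod_pow_sub // mulnCA => /eqP; rewrite eqn_pmul2l; last first.
  have qp : (0 < q.-1)%N by rewrite -ltnS prednK.
  by elim/big_ind: _ => // [x y|i _]; rewrite ?muln_gt0 ?expn_gt0 ?q0 ?qp // => -> ->.
have -> : (\prod_(i < k) qint q (k - i) = qfact q k)%N.
  by rewrite (qfact_split q (leqnn k)) subnn /qfact big_geq // muln1.
move=> /eqP e; rewrite /gauss_binom (qfact_split q le) -e -mulnA mulnK //.
by rewrite muln_gt0 !qfact_gt0.
Qed.
Local Open Scope ring_scope.
Section FinCount.
Variable F : finFieldType.
Local Notation q := #|F|.

Lemma rank_adds_row m n (S : 'M[F]_(m, n)) (v : 'rV_n) :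
  \rank (S + v)%MS = (\rank S + ~~ (v <= S)%MS)%N.
Proof.
case: (boolP (v <= S)%MS) => vS.
  by rewrite (addsmx_idPl vS) addn0.
apply/anti_leq/andP; split.
  case: (mxrank_adds_leqif S v) => le _.
  by apply: leq_trans le _; rewrite leq_add2l rank_leq_row.
rewrite addn1; apply: rank_ltmx; rewrite ltmxEneq addsmxSl /=.
apply: contra vS => H.
exact: submx_trans (addsmxSr _ _) H.
Qed.

Lemma card_rowspace m n (A : 'M[F]_(m, n)) :
  #|[set v : 'rV_n | (v <= A)%MS]| = (q ^ \rank A)%N.
Proof.
have -> : [set v : 'rV_n | (v <= A)%MS] =
   [set u *m row_base A | u in [set: 'rV_(\rank A)]].
  apply/setP => v; rewrite !inE; apply/idP/imsetP.
    by rewrite -(eq_row_base A) => /submxP[u ->]; exists u; rewrite ?inE.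
  by move=> [u _ ->]; apply: submx_trans (submxMl _ _) _; rewrite eq_row_base.
rewrite card_imset; last first.
  have [B HB] := row_freeP (row_base_free A).
  by apply: (can_inj (g := mulmx^~ B)) => u; rewrite -mulmxA HB mulmx1.
by rewrite cardsT card_mx mul1n.
Qed.

Lemma count_ext n (W : 'M[F]_n) j0 (A0 : 'M[F]_(j0, n)) :
  (A0 <= W)%MS -> forall m, (\rank A0 + m <= \rank W)%N ->
  #|[set B : 'M[F]_(m, n) | (B <= W)%MS && (\rank (A0 + B)%MS == \rank A0 + m)%N]|
   = (\prod_(i < m) (q ^ \rank W - q ^ (\rank A0 + i)))%N.
Proof.
move=> A0W; set j := \rank A0; set r := \rank W.
elim=> [_|m IH lemr].
  rewrite big_ord0 (@eq_card1 _ (0 : 'M_(0, n))) // => B.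
  by rewrite !inE [B]flatmx0 eqxx sub0mx /= addsmx0 addn0 eqxx.
have hm : (j + m <= r)%N by apply: leq_trans lemr; rewrite leq_add2l.
have IHm := IH hm.
rewrite big_ord_recr /= -IHm -[LHS]sum1_card.
rewrite (partition_big (fun B : 'M_(1 + m, n) => dsubmx B)
   (mem [set B : 'M[F]_(m, n) | (B <= W)%MS && (\rank (A0 + B)%MS == j + m)%N])) /=;
  last first.
  move=> B; rewrite !inE -[B](vsubmxK B) col_mxKd (col_mx_sub (usubmx B) (dsubmx B) W).
  move: (usubmx B) (dsubmx B) => v B' /andP[/andP[vW ->] /eqP rk] /=.
  have e : (A0 + col_mx v B' :=: (A0 + B') + v)%MS.
    apply: eqmx_trans (adds_eqmx (eqmx_refl A0) (eqmx_sym (addsmxE v B'))) _.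
    by rewrite addsmxA [(A0 + v)%MS]addsmxC -addsmxA addsmxC.
  move: rk; rewrite e rank_adds_row => rk.
  have le : (\rank (A0 + B')%MS <= j + m)%N.
    case: (mxrank_adds_leqif A0 B') => le _; apply: leq_trans le _.
    by rewrite leq_add2l rank_leq_row.
  move: rk le; case: (v <= _)%MS => /= rk le.
    by move: rk le => /=; lia.
  by apply/eqP; move: rk => /=; lia.
rewrite -sum_nat_const; apply: eq_bigr => B' /[!inE] /andP[B'W /eqP rkB'].
rewrite (reindex (fun v : 'rV_n => col_mx v B')) /=; last first.
  exists (fun B : 'M_(1 + m, n) => usubmx B) => [v _ | B].
    by rewrite col_mxKu.
  by rewrite inE => /andP[_ /eqP <-]; rewrite vsubmxK.
set S := (A0 + B')%MS.
have SW : (S <= W)%MS by rewrite addsmx_sub A0W.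
transitivity #|[set v : 'rV_n | (v <= W)%MS] :\: [set v : 'rV_n | (v <= S)%MS]|.
  rewrite -sum1_card; apply: eq_bigl => v; rewrite !inE col_mxKd eqxx andbT.
  rewrite (col_mx_sub v B' W) B'W andbT.
  have e : (A0 + col_mx v B' :=: S + v)%MS.
    apply: eqmx_trans (adds_eqmx (eqmx_refl A0) (eqmx_sym (addsmxE v B'))) _.
    by rewrite addsmxA [(A0 + v)%MS]addsmxC -addsmxA addsmxC.
  rewrite e rank_adds_row rkB' andbC; congr (_ && _).
  case: (v <= S)%MS => /=.
    by apply/negbTE/eqP; lia.
  by apply/eqP; lia.
rewrite cardsDS; last by apply/fintype.subsetP => v; rewrite !inE => /submx_trans; apply.
by rewrite !card_rowspace rkB'.
Qed.


Definition subsp n (A0 : 'M[F]_(1, n)) k :=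
  [set W : 'M[F]_n | [&& <<W>>%MS == W, \rank W == k & (A0 <= W)%MS]].

Lemma count_sub n (A0 : 'M[F]_(1, n)) m : (\rank A0 + m <= n)%N ->
  (#|subsp A0 (\rank A0 + m)| *
    \prod_(i < m) (q ^ (\rank A0 + m) - q ^ (\rank A0 + i)))%N
  = (\prod_(i < m) (q ^ n - q ^ (\rank A0 + i)))%N.
Proof.
move=> le; set j := \rank A0.
have := count_ext (submx1 A0) (m:=m); rewrite mxrank1 => /(_ le) <-.
rewrite -[RHS]sum1_card (partition_big (fun B : 'M_(m, n) => <<(A0 + B)%MS>>%MS)
   (mem (subsp A0 (j + m)%N))) /=; last first.
  move=> B; rewrite !inE genmx_id mxrank_gen eqxx /= => /andP[_ ->] /=.
  by rewrite genmxE addsmxSl.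
rewrite -sum_nat_const; apply: eq_bigr => W /[!inE] /and3P[/eqP gW /eqP rW A0W].
have := count_ext A0W (m:=m); rewrite rW => /(_ (leqnn _)) <-.
rewrite -[LHS]sum1_card; apply: eq_bigl => B; rewrite !inE submx1 /=.
apply/idP/idP.
  move=> /andP[BW /eqP rk]; rewrite rk eqxx /=; apply/eqP; rewrite -gW; apply/genmxP.
  have sub : (A0 + B <= W)%MS by rewrite addsmx_sub A0W BW.
  by rewrite sub /= -(mxrank_leqif_sup sub) rk rW.
move=> /andP[/eqP rk /eqP <-]; rewrite genmxE addsmxSr rk eqxx //.
Qed.


Lemma prod_shift a m :
  (\prod_(i < m) (q ^ a.+1 - q ^ i.+1) = q ^ m * \prod_(i < m) (q ^ a - q ^ i))%N.
Proof.
have -> : (q ^ m = \prod_(i < m) q)%N by rewrite prod_nat_const card_ord.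
rewrite -big_split /=; apply: eq_bigr => i _.
by rewrite !expnS mulnBr.
Qed.

Lemma card_subsp0 n k : (k <= n)%N -> #|subsp (0 : 'rV[F]_n) k| = gauss_binom q k n.
Proof.
move=> le; apply: gauss_eq => //; first exact: finNzRing_gt1.
by have := @count_sub n (0 : 'rV[F]_n) k; rewrite mxrank0 /= !add0n; apply.
Qed.

Lemma card_subsp1 n k (v : 'rV[F]_n) : v != 0 -> (1 <= k <= n)%N ->
  #|subsp v k| = gauss_binom q k.-1 n.-1.
Proof.
move=> v0 /andP[k1 le]; apply: gauss_eq; first exact: finNzRing_gt1.
  by lia.
have := @count_sub n v k.-1; rewrite rank_rV v0 /= add1n prednK //.
have n0 : (0 < n)%N by apply: leq_trans le.
move=> /(_ le).
have -> : (q ^ n = q ^ n.-1.+1)%N by rewrite prednK.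
have -> : (q ^ k = q ^ k.-1.+1)%N by rewrite prednK.
under eq_bigr do rewrite add1n.
under [in RHS]eq_bigr do rewrite add1n.
rewrite !prod_shift mulnCA => /eqP; rewrite eqn_pmul2l ?expn_gt0 //.
  by move/eqP.
by rewrite (ltnW (finNzRing_gt1 F)).
Qed.

End FinCount.
Local Open Scope classical_set_scope.
Lemma pivot_basis (F : fieldType) n k (W : 'M[F]_n) : \rank W = k ->
  exists (A : 'M[F]_(k, n)) (f : 'I_k -> 'I_n),
    [/\ injective f, (A == W)%MS & forall i i', A i (f i') = (i == i')%:R].
Proof.
move=> <-; set A1 := row_base W.
have rf : row_full A1^T by rewrite /row_full mxrank_tr eq_row_base.
set f := fullrankfun rf; set C := rowsub f A1^T.
have Cu : C^T \in unitmx by rewrite unitmx_tr fullrowsub_unit.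
exists (invmx C^T *m A1), f; split.
- exact: fullrankfun_inj.
- apply/eqmxP; apply: eqmx_trans (eq_row_base W); apply/eqmxP/eqmxMunitP.
  by exists (invmx C^T); rewrite ?unitmx_inv.
- have e : colsub f A1 = C^T by apply/matrixP => i j; rewrite !mxE.
  move=> i i'; have := congr1 (fun M : 'M[F]_(\rank W) => M i i') (mulVmx Cu).
  by rewrite -e mulmx_colsub !mxE.
Qed.

Section Lat.
Variables (R : realType) (n p : nat) (B0 : 'M[R]_n).
Hypotheses (pr : prime p) (B0u : B0 \in unitmx).

Definition phi (z : 'rV[int]_n) : 'rV[R]_n :=
  p%:R^-1 *: (map_mx (fun a : int => a%:~R) z *m B0).
Definition red (z : 'rV[int]_n) : 'rV['F_p]_n := map_mx (fun a : int => a%:~R) z.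

Lemma pR0 : (p%:R : R) != 0.
Proof. by rewrite pnatr_eq0 -lt0n prime_gt0. Qed.

Lemma phiB z1 z2 : phi (z1 - z2) = phi z1 - phi z2.
Proof. by rewrite /phi map_mxB mulmxBl scalerBr. Qed.

Lemma phiD z1 z2 : phi (z1 + z2) = phi z1 + phi z2.
Proof. by rewrite /phi map_mxD mulmxDl scalerDr. Qed.

Lemma phi0 : phi 0 = 0.
Proof. by rewrite /phi map_mx0 mul0mx scaler0. Qed.

Lemma phiMn z m : phi (z *+ m) = phi z *+ m.
Proof. by elim: m => [|m IH]; rewrite ?mulr0n ?phi0 // !mulrS phiD IH. Qed.

Lemma redB z1 z2 : red (z1 - z2) = red z1 - red z2.
Proof. by rewrite /red map_mxB. Qed.

Lemma redD z1 z2 : red (z1 + z2) = red z1 + red z2.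
Proof. by rewrite /red map_mxD. Qed.

Lemma red0 : red 0 = 0.
Proof. by rewrite /red map_mx0. Qed.

Lemma redMn z m : red (z *+ m) = red z *+ m.
Proof. by elim: m => [|m IH]; rewrite ?mulr0n ?red0 // !mulrS redD IH. Qed.

Lemma liftR_inj : injective (map_mx (fun a : int => (a%:~R : R)) : 'rV[int]_n -> 'rV[R]_n).
Proof.
move=> z1 z2 /rowP e; apply/rowP => j; have := e j; rewrite !mxE.
by move/eqP; rewrite eqr_int => /eqP.
Qed.

Lemma phi_inj : injective phi.
Proof.
move=> z1 z2; rewrite /phi => /(congr1 (fun x => p%:R *: x)).
rewrite !scalerA divff ?pR0 // !scale1r => /(congr1 (mulmx^~ (invmx B0))).
by rewrite -!mulmxA mulmxV // !mulmx1 => /liftR_inj.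
Qed.

Lemma latdivP x : lat_div p (lattice_of B0) x <-> exists z, x = phi z.
Proof.
rewrite /lat_div /lattice_of /=; split=> [[z e]|[z ->]]; exists z.
  by rewrite /phi -e scalerA mulVf ?pR0 // scale1r.
by rewrite /phi scalerA divff ?pR0 // scale1r.
Qed.

Lemma LphiP z : lattice_of B0 (phi z) <-> red z = 0.
Proof.
rewrite /lattice_of /=; split=> [[y e]|e].
  have : z = y *+ p.
    apply: phi_inj; rewrite phiMn -scaler_nat e /phi scalerA divff ?pR0 //.
    by rewrite scale1r.
  by move=> ->; apply/rowP => j; rewrite !mxE mulmxnE rmorphMn /= -mulr_natr (pchar_Fp_0 pr) mulr0.
exists (map_mx (fun a => (a %/ p)%Z) z).
have ez : z = map_mx (fun a => (a %/ p)%Z) z *+ p.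
  apply/rowP => j; rewrite mulmxnE mxE -mulr_natr natz divzK //.
  rewrite (dvdz_pcharf (pchar_Fp pr)); have := congr1 (fun v : 'rV['F_p]_n => v 0 j) e.
  by rewrite !mxE => ->.
by rewrite {1}ez phiMn -scaler_nat /phi scalerA divff ?pR0 // scale1r.
Qed.


Definition liftZ (v : 'rV['F_p]_n) : 'rV[int]_n := map_mx (fun c : 'F_p => (c : nat)%:Z) v.

Lemma natFp (c : 'F_p) : (c : nat)%:R = c.
Proof. exact: natr_Zp. Qed.

Lemma red_liftZ v : red (liftZ v) = v.
Proof. by apply/rowP => j; rewrite !mxE -pmulrn natFp. Qed.

Definition MW (W : 'M['F_p]_n) : set 'rV[R]_n :=
  [set x | exists z, x = phi z /\ (red z <= W)%MS].

Lemma MW_phi W z : MW W (phi z) <-> (red z <= W)%MS.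
Proof. by split=> [[z' [/phi_inj -> //]]|h]; exists z. Qed.

Lemma phi_sum (I : finType) (g : I -> 'rV[int]_n) :
  phi (\sum_i g i) = \sum_i phi (g i).
Proof. exact: (big_morph phi phiD phi0). Qed.

Lemma red_sum (I : finType) (g : I -> 'rV[int]_n) :
  red (\sum_i g i) = \sum_i red (g i).
Proof. exact: (big_morph red redD red0). Qed.

Section Piv.
Variables (k : nat) (f : 'I_k -> 'I_n) (A : 'M['F_p]_(k, n)).
Hypotheses (finj : injective f) (Apiv : forall i i', A i (f i') = (i == i')%:R).

Definition Im : {set 'I_n} := [set f i | i in 'I_k]%SET.
Definition finv j := [pick i | f i == j].

Lemma finv_f i : finv (f i) = Some i.
Proof.
rewrite /finv; case: pickP => [i' /eqP /finj -> //|/(_ i)].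
by rewrite eqxx.
Qed.

Lemma finv_N j : j \notin Im -> finv j = None.
Proof.
move=> jn; rewrite /finv; case: pickP => // i /eqP ei.
by move: jn; rewrite -ei imset_f.
Qed.

Definition BzT (T : nzRingType) : 'M[T]_n :=
  \matrix_(j, c) match finv j with
                | Some i => ((A i c : nat)%:R : T)
                | None => (p * (j == c))%:R end.

Lemma Apiv_val i i' : (A i (f i') : nat) = (i == i').
Proof. by rewrite Apiv val_Fp_nat // modn_small // (leq_ltn_trans (leq_b1 _)) ?prime_gt1. Qed.

Lemma col_f (T : nzRingType) (y : 'rV[T]_n) i0 : (y *m BzT T) 0 (f i0) = y 0 (f i0).
Proof.
rewrite mxE (bigID (mem Im)) /= big_imset /=; last by move=> ? ? _ _; apply: finj.
rewrite (bigD1 i0) //= big1 => [|i ni]; last by rewrite mxE finv_f Apiv_val (negPf ni) mulr0.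
rewrite big1 => [|j jn]; last first.
  rewrite mxE finv_N //; case: eqP => [ej|]; last by rewrite muln0 mulr0.
  by move: jn; rewrite ej imset_f.
by rewrite mxE finv_f Apiv_val eqxx mulr1 !addr0.
Qed.

Lemma col_n (T : nzRingType) (y : 'rV[T]_n) c : c \notin Im ->
  (y *m BzT T) 0 c = \sum_i y 0 (f i) * (A i c : nat)%:R + y 0 c * p%:R.
Proof.
move=> cn; rewrite mxE (bigID (mem Im)) /= big_imset /=; last by move=> ? ? _ _; apply: finj.
congr (_ + _); first by apply: eq_bigr => i _; rewrite mxE finv_f.
rewrite (bigD1 c) //= big1 => [|j /andP[jn jc]]; last first.
  by rewrite mxE finv_N // (negPf jc) muln0 mulr0.
by rewrite mxE finv_N // eqxx muln1 addr0.
Qed.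

Lemma map_BzT (T : nzRingType) : map_mx (fun a : int => a%:~R) (BzT int) = BzT T.
Proof.
apply/matrixP => j c; rewrite !mxE; case: finv => [i|]; exact: rmorph_nat.
Qed.


Lemma BzFp_sub : (BzT 'F_p <= A)%MS.
Proof.
apply/row_subP => j; case e: (finv j) => [i|].
  have -> : row j (BzT 'F_p) = row i A by apply/rowP => c; rewrite !mxE e natFp.
  exact: row_sub.
have -> : row j (BzT 'F_p) = 0.
  by apply/rowP => c; rewrite !mxE e natrM (pchar_Fp_0 pr) mul0r.
exact: sub0mx.
Qed.

Lemma red_le_A z : (red z <= A)%MS <-> exists y, z = y *m BzT int.
Proof.
split; last first.
  move=> [y ->]; rewrite /red map_mxM /= map_BzT.
  exact: submx_trans (submxMl _ _) BzFp_sub.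
move=> /submxP[u ew].
have uf i : u 0 i = red z 0 (f i).
  rewrite ew mxE (bigD1 i) //= Apiv eqxx mulr1 big1 ?addr0 // => i' ni'.
  by rewrite Apiv (negPf ni') mulr0.
pose d c := (z 0 c - \sum_i z 0 (f i) * (A i c : nat)%:R)%R.
have dd c : (p %| d c)%Z.
  rewrite (dvdz_pcharf (pchar_Fp pr)) rmorphB rmorph_sum /=.
  under eq_bigr do rewrite rmorphM rmorph_nat /= natFp.
  have := congr1 (fun v : 'rV['F_p]_n => v 0 c) ew; rewrite !mxE => ->.
  by rewrite subr_eq0; apply/eqP/eq_bigr => i _; rewrite uf mxE.
exists (\row_j match finv j with Some _ => z 0 j | None => ((d j) %/ p)%Z end).
apply/rowP => c; case: (boolP (c \in Im)) => [/imsetP[i0 _ ->]|cn].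
  by rewrite col_f mxE finv_f.
rewrite col_n // mxE finv_N //.
under eq_bigr do rewrite mxE finv_f.
by rewrite natz divzK // /d addrC subrK.
Qed.

Lemma Bz_unit : BzT R \in unitmx.
Proof.
rewrite -row_free_unit -kermx_eq0; apply/eqP/row_matrixP => i; rewrite row0.
set y := row i _.
have yB : y *m BzT R = 0 by apply/sub_kermxP; exact: row_sub.
have yf i0 : y 0 (f i0) = 0 by rewrite -(col_f y) yB mxE.
apply/rowP => c; rewrite [RHS]mxE; case: (boolP (c \in Im)) => [/imsetP[i0 _ ->] | cn].
  exact: yf.
have := col_n y cn; rewrite yB mxE big1 => [|i' _]; last by rewrite yf mul0r.
by rewrite add0r => /esym/eqP; rewrite mulf_eq0 (negPf pR0) orbF => /eqP.
Qed.

Definition BM := p%:R^-1 *: (BzT R *m B0).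

Lemma BM_unit : BM \in unitmx.
Proof. by rewrite unitmxZ ?unitfE ?invr_eq0 ?pR0 // unitmx_mul Bz_unit B0u. Qed.

Lemma lift_BM y : map_mx (fun a : int => a%:~R) y *m BM = phi (y *m BzT int).
Proof. by rewrite /phi map_mxM map_BzT /BM -scalemxAr mulmxA. Qed.

Lemma MW_is_lattice W : (A == W)%MS -> is_lattice (MW W).
Proof.
move=> AW; exists BM; split; first exact: BM_unit.
apply/seteqP; split => x.
  move=> [z [-> rz]]; rewrite -(eqmxP AW) in rz.
  by case/red_le_A: rz => y ->; exists y; rewrite lift_BM.
move=> [y ->]; rewrite lift_BM; apply/MW_phi; rewrite -(eqmxP AW).
by apply/red_le_A; exists y.
Qed.

Lemma MW_quot W : (A == W)%MS -> row_free A ->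
  quot_dim p (MW W) (lattice_of B0) k.
Proof.
move=> AW rA.
exists (fun i => phi (liftZ (row i A))); split.
  by move=> i; apply/MW_phi; rewrite red_liftZ -(eqmxP AW) row_sub.
move=> m [z [-> rz]].
have key (c : 'I_k -> nat) : lattice_of B0 (phi z - \sum_i (c i)%:R *: phi (liftZ (row i A)))
    <-> red z = \sum_i (c i)%:R *: row i A.
  rewrite (eq_bigr (fun i => phi (liftZ (row i A) *+ c i))) => [|i _]; last first.
    by rewrite phiMn scaler_nat.
  rewrite -phi_sum -phiB LphiP redB red_sum.
  under eq_bigr do rewrite redMn red_liftZ -scaler_nat.
  by split => [/eqP|->]; rewrite ?subrr // subr_eq0 => /eqP.
rewrite -(eqmxP AW) in rz; case/submxP: rz => u ew.
pose a : {ffun 'I_k -> 'I_p} := [ffun i => cast_ord (Fp_cast pr) (u 0 i)].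
have av i : (((a i : nat))%:R : 'F_p) = u 0 i by rewrite ffunE /= natFp.
exists a; split.
  by apply/key; rewrite ew mulmx_sum_row; apply: eq_bigr => i _; rewrite av.
move=> a' /key e'; apply/ffunP => i; apply/val_inj => /=.
have : \row_i (((a' i : nat))%:R : 'F_p) = u.
  apply: (row_free_inj rA); rewrite /= -ew e' mulmx_sum_row.
  by apply: eq_bigr => i' _; rewrite mxE.
move/rowP/(_ i); rewrite mxE ffunE /= => <-.
by rewrite val_Fp_nat // modn_small.
Qed.

End Piv.


Lemma Lsub x : lattice_of B0 x -> exists z, x = phi z /\ red z = 0.
Proof.
move=> [y ->]; exists (y *+ p).
have e : phi (y *+ p) = map_mx (fun a : int => a%:~R) y *m B0.
  by rewrite phiMn -scaler_nat /phi scalerA divff ?pR0 // scale1r.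
by split => //; apply/LphiP; rewrite e; exists y.
Qed.

Lemma MW_Lk k W : (1 <= k <= n - 1)%N -> W \in subsp (0 : 'rV['F_p]_n) k ->
  Lk p k (lattice_of B0) (MW W).
Proof.
move=> /andP[k1 kn]; rewrite inE => /and3P[_ /eqP rW _].
have [A [f [finj AW Apiv]]] := pivot_basis rW.
have rA : row_free A by rewrite /row_free (eqmx_rank AW) rW.
split.
- exact: (MW_is_lattice finj Apiv AW).
- split.
    by move=> x /Lsub[z [-> rz]]; apply/MW_phi; rewrite rz sub0mx.
  have : ~~ (W <= (0 : 'M_n))%MS.
    by rewrite submx0; apply/eqP => W0; move: rW k1; rewrite W0 mxrank0 => <-.
  case/row_subPn => i; rewrite submx0 => ri sub.
  have /sub /Lsub[z [/phi_inj ez rz]] : MW W (phi (liftZ (row i W))).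
    by apply/MW_phi; rewrite red_liftZ row_sub.
  by move: ri; rewrite -(red_liftZ (row i W)) ez rz eqxx.
- split.
    by move=> x [z [-> _]]; apply/latdivP; exists z.
  have : ~~ (1%:M <= W)%MS.
    apply/negP => /mxrankS; rewrite mxrank1 rW => nk.
    by move: kn k1; rewrite leqNgt; lia.
  case/row_subPn => i ri sub.
  have /sub : lat_div p (lattice_of B0) (phi (liftZ (row i 1%:M))).
    by apply/latdivP; eexists.
  by move/MW_phi; rewrite red_liftZ; apply/negP.
- exact: (MW_quot AW rA).
Qed.


Lemma Lk_MW k M : Lk p k (lattice_of B0) M ->
  exists2 W, W \in subsp (0 : 'rV['F_p]_n) k & M = MW W.
Proof.
move=> [[BM [_ eM]] [LM _] [Mdiv _] [x [xM xq]]].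
have M0 : M 0 by rewrite eM; exists 0; rewrite map_mx0 mul0mx.
have MD x1 x2 : M x1 -> M x2 -> M (x1 + x2).
  by rewrite eM => -[y1 ->] [y2 ->]; exists (y1 + y2); rewrite map_mxD mulmxDl.
have Msum (g : 'I_k -> 'rV[R]_n) : (forall i, M (g i)) -> M (\sum_i g i).
  by move=> h; elim/big_ind: _ => //; apply: MD.
have MMn x1 m : M x1 -> M (x1 *+ m).
  by move=> h; elim: m => [|m IH]; rewrite ?mulr0n // mulrS; apply: MD.
have Mphi z : M (phi z) <-> exists z', M (phi z') /\ red z' = red z.
  split => [h|[z' [h e]]]; first by exists z.
  have -> : z = z' + (z - z') by rewrite addrC subrK.
  rewrite phiD; apply: MD h _; apply: LM; apply/LphiP; by rewrite redB e subrr.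
pose S := [set v : 'rV['F_p]_n | `[< exists z, M (phi z) /\ red z = v >]]%SET.
have inS v : (v \in S) <-> exists z, M (phi z) /\ red z = v by rewrite inE asboolE.
have SD v1 v2 : v1 \in S -> v2 \in S -> v1 + v2 \in S.
  move=> /inS[z1 [h1 <-]] /inS[z2 [h2 <-]]; apply/inS; exists (z1 + z2).
  by rewrite phiD redD; split => //; apply: MD.
have S0 : 0 \in S by apply/inS; exists 0; rewrite phi0 red0.
have SZ c v : v \in S -> c *: v \in S.
  move=> vS; rewrite -[c]natFp scaler_nat.
  by elim: (c : nat) => [|m IH]; rewrite ?mulr0n // mulrS; apply: SD.
pose G := \matrix_(i < #|S|) (enum_val i : 'rV['F_p]_n).
have memG v : (v <= <<G>>)%MS = (v \in S).
  rewrite genmxE; apply/idP/idP.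
    case/submxP => u ->; rewrite mulmx_sum_row.
    elim/big_ind: _ => [|v1 v2|i _]; [exact: S0 | exact: SD |].
    by rewrite rowK; apply: SZ; exact: enum_valP.
  by move=> vS; have := row_sub (enum_rank_in vS v) G; rewrite rowK enum_rankK_in.
set WM := <<G>>%MS.
have MWM : M = MW WM.
  apply/seteqP; split => y.
    move=> My; have /latdivP[z ez] := Mdiv _ My; subst y.
    by apply/MW_phi; rewrite memG; apply/inS; exists z.
  by move=> [z [-> rz]]; apply/Mphi; apply/inS; rewrite -memG.
exists WM => //.
rewrite inE genmx_id eqxx sub0mx andbT /=.
have cardS : #|S| = (p ^ k)%N.
  have [zx hx] : exists zx : 'I_k -> 'rV[int]_n, forall i, x i = phi (zx i).
    apply: (fin_all_exists (P := fun i z => x i = phi z)) => i.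
    by apply/latdivP; apply: Mdiv; exact: xM.
  have sx (c : 'I_k -> nat) : \sum_i (c i)%:R *: x i = phi (\sum_i zx i *+ c i).
    by rewrite phi_sum; apply: eq_bigr => i _; rewrite hx phiMn scaler_nat.
  pose g (a : {ffun 'I_k -> 'I_p}) := red (\sum_i zx i *+ a i).
  have Mg (a : {ffun 'I_k -> 'I_p}) : M (phi (\sum_i zx i *+ a i)).
    by rewrite phi_sum; apply: Msum => i; rewrite phiMn -hx; apply: MMn.
  have -> : S = (g @: [set: {ffun 'I_k -> 'I_p}])%SET.
    apply/setP => v; apply/idP/imsetP.
      move=> /inS[z [Mz <-]]; have [a [ha _]] := xq _ Mz; exists a => //.
      move: ha; rewrite (sx (fun i => a i)) -phiB => /LphiP.
      by rewrite redB => /eqP; rewrite subr_eq0 => /eqP.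
    by move=> [a _ ->]; apply/inS; exists (\sum_i zx i *+ a i); split.
  rewrite card_imset ?cardsT ?card_ffun ?card_ord //.
  move=> a a' e.
  have [a0 [_ u0]] := xq _ (Mg a).
  have ha : lattice_of B0 (phi (\sum_i zx i *+ a i) - \sum_i (a i : nat)%:R *: x i).
    by rewrite (sx (fun i => a i)) -phiB; apply/LphiP; rewrite redB subrr.
  have ha' : lattice_of B0 (phi (\sum_i zx i *+ a i) - \sum_i (a' i : nat)%:R *: x i).
    rewrite (sx (fun i => a' i)) -phiB; apply/LphiP; rewrite redB.
    by move: e; rewrite /g => ->; rewrite subrr.
  by rewrite -(u0 _ ha) (u0 _ ha').
have := card_rowspace WM; rewrite (card_Fp pr).
rewrite (_ : [set v | (v <= WM)%MS]%SET = S); last by apply/setP => v; rewrite inE memG.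
by rewrite cardS => /eqP; rewrite eqn_exp2l ?prime_gt1 // eq_sym.
Qed.


Lemma MW_inj k : {in subsp (0 : 'rV['F_p]_n) k &, injective MW}.
Proof.
move=> W1 W2; rewrite !inE => /and3P[/eqP g1 _ _] /and3P[/eqP g2 _ _] e.
have sub (Wa Wb : 'M['F_p]_n) : MW Wa = MW Wb -> (Wa <= Wb)%MS.
  move=> eab; apply/row_subP => i.
  have : MW Wa (phi (liftZ (row i Wa))) by apply/MW_phi; rewrite red_liftZ row_sub.
  by rewrite eab => /MW_phi; rewrite red_liftZ.
by rewrite -g1 -g2; apply/genmxP; rewrite !sub.
Qed.

Lemma LkE k : (1 <= k <= n - 1)%N ->
  Lk p k (lattice_of B0) = MW @` [set` subsp (0 : 'rV['F_p]_n) k].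
Proof.
move=> kr; apply/seteqP; split => M.
  by case/Lk_MW => W WS ->; exists W.
by move=> [W WS <-]; apply: MW_Lk.
Qed.

End Lat.

Lemma poly_eq_nat (R : numDomainType) (P Q : {poly R}) :
  (forall t : nat, P.[t%:R] = Q.[t%:R]) -> P = Q.
Proof.
move=> h; apply/eqP; rewrite -subr_eq0; apply/negPn/negP => nz.
set rs := [seq (t%:R : R) | t <- iota 0 (size (P - Q))].
have hr : all (root (P - Q)) rs.
  by apply/allP => x /mapP[t _ ->]; rewrite rootE hornerD hornerN h subrr.
have hu : uniq rs.
  by rewrite map_inj_uniq ?iota_uniq // => a b /eqP; rewrite eqr_nat => /eqP.
by have := max_poly_roots nz hr hu; rewrite size_map size_iota ltnn.
Qed.

Lemma ehr_count (R : realType) n (N Q : set 'rV[R]_n) f t (S : seq 'rV[R]_n) :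
  is_ehrhart N Q f -> uniq S -> (forall x, x \in S -> dilate t Q x) ->
  (forall x, dilate t Q x -> N x -> x \in S) ->
  f.[t%:R] = (count (fun x => `[< N x >]) S)%:R.
Proof.
move=> /(_ t) [s [us hs ->]] uS S1 S2; congr (_%:R).
rewrite -size_filter; apply: perm_size; apply: uniq_perm => //; first exact: filter_uniq.
move=> x; rewrite mem_filter; apply/idP/idP.
  by move=> /hs [dx Nx]; rewrite asboolT // S2.
by move=> /andP [/asboolP Nx xS]; apply/hs; split => //; exact: S1.
Qed.

Lemma sum_ite (R : realType) (T : Type) (b : pred T) (S : seq T) (a c : nat) :
  ((\sum_(x <- S) (if b x then a else c))%N%:R : R) =
    c%:R * (size S)%:R + (a%:R - c%:R) * (count b S)%:R.
Proof.
elim: S => [|x S IH]; first by rewrite big_nil /= !mulr0 addr0.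
rewrite big_cons /= natrD IH !natrD; case: (b x) => /=; ring.
Qed.

Lemma coef_comp_scale (R : comNzRingType) (E : {poly R}) (c : R) l :
  (E \Po (c *: 'X))`_l = c ^+ l * E`_l.
Proof.
rewrite coef_comp_poly.
under eq_bigr do rewrite exprZn coefZ coefXn.
case: (ltnP l (size E)) => hl.
  rewrite (bigD1 (Ordinal hl)) //= eqxx mulr1 big1 ?addr0; last first.
    move=> i ni; rewrite (_ : (l == i) = false) ?mulr0 //.
    apply/negbTE; apply: contra ni => /eqP e; apply/eqP/val_inj => /=.
    by rewrite e.
  by rewrite mulrC.
rewrite big1 ?nth_default ?mulr0 // => i _.
by rewrite gtn_eqF ?mulr0 // (leq_trans (ltn_ord i) hl).
Qed.


Local Open Scope classical_set_scope.
Local Open Scope ring_scope.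

Theorem lemma3p1 (R : realType) (n : nat) (L : set 'rV[R]_n)
  (vs : seq 'rV[R]_n) (p k : nat) (E : {poly R})
  (EM : set 'rV[R]_n -> {poly R}) :
  is_lattice L ->
  (forall v, v \in vs -> L v) ->
  \rank (\matrix_(i < size vs) (nth 0 vs i - nth 0 vs 0)) = n ->
  prime p -> (1 <= k <= n - 1)%N ->
  is_ehrhart L (conv vs) E ->
  (forall M, Lk p k L M -> is_ehrhart M (conv vs) (EM M)) ->
  \sum_(M \in Lk p k L) EM M =
    (gauss_binom p k.-1 n.-1)%:R *: (E \Po (p%:R *: 'X))
    + ((gauss_binom p k n)%:R - (gauss_binom p k.-1 n.-1)%:R) *: E
  /\ forall l : nat, (l <= n)%N ->
    (\sum_(M \in Lk p k L) EM M)`_l =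
      ((gauss_binom p k n)%:R
        + (p ^ l - 1)%:R * (gauss_binom p k.-1 n.-1)%:R) * E`_l.
Proof.
move=> [B0 [B0u ->]] _ _ pr kr EE EMh.
set Q := conv vs.
set SW := subsp (0 : 'rV['F_p]_n) k.
set N := gauss_binom p k n; set N' := gauss_binom p k.-1 n.-1.
have LHSE : \sum_(M \in Lk p k (lattice_of B0)) EM M = \sum_(W in SW) EM (MW B0 W).
  rewrite (LkE pr B0u kr) fsbig_image; last first.
    by move=> W1 W2; rewrite !in_setE /=; apply: (MW_inj pr B0u).
  rewrite -(@bigfs _ _ _ _ (enum SW)) ?enum_uniq //; last first.
    by move=> W WS; rewrite mem_enum => /negP; case; exact: WS.
  by rewrite big_enum_cond; apply: eq_bigl => W; rewrite andbb.
have pR : (p%:R : R) != 0 by rewrite pnatr_eq0 -lt0n prime_gt0.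
have kr' : (1 <= k <= n)%N by move: kr => /andP[k1 kn]; rewrite k1 /= (leq_trans kn) ?leq_subr.
have ev t : (\sum_(W in SW) EM (MW B0 W)).[t%:R] =
    N'%:R * E.[(p * t)%:R] + (N%:R - N'%:R) * E.[t%:R].
  have [s0 [us0 hs0 Ept]] := EE (p * t)%N.
  set S := map (fun x => p%:R^-1 *: x) s0.
  have uS : uniq S.
    by rewrite map_inj_uniq // => x y; apply: scalerI; rewrite invr_eq0.
  have S1 x : x \in S -> dilate t Q x /\ lat_div p (lattice_of B0) x.
    case/mapP => y ys ->; have [[q Qq eq] Ly] := (hs0 y).1 ys.
    split; first by exists q => //; rewrite -eq scalerA natrM mulrA mulVf // mul1r.
    by rewrite /lat_div /= scalerA divff // scale1r.
  have S2 x : dilate t Q x -> lat_div p (lattice_of B0) x -> x \in S.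
    move=> [q Qq eq] Lx; apply/mapP; exists (p%:R *: x); last first.
      by rewrite scalerA mulVf // scale1r.
    by apply/(hs0 _).2; split => //; exists q => //; rewrite -eq scalerA natrM.
  have Et : E.[t%:R] = (count (fun x => `[< lattice_of B0 x >]) S)%:R.
    apply: (ehr_count EE uS) => [x /S1[]//|x dx Lx]; apply: S2 => //.
    by have [z [-> _]] := Lsub pr B0u Lx; apply/(latdivP _ pr); exists z.
  have Ept' : E.[(p * t)%:R] = (size S)%:R by rewrite Ept size_map.
  have EMt W : W \in SW ->
      (EM (MW B0 W)).[t%:R] = (count (fun x => `[< MW B0 W x >]) S)%:R.
    move=> WS; apply: (ehr_count (EMh _ (MW_Lk pr B0u kr WS)) uS) => [x /S1[]//|x dx Mx].
    by apply: S2 => //; case: Mx => z [-> _]; apply/(latdivP _ pr); exists z.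
  rewrite horner_sum (eq_bigr _ EMt) -natr_sum.
  have cnt : (\sum_(W in SW) count (fun x => `[< MW B0 W x >]) S =
      \sum_(x <- S) (if `[< lattice_of B0 x >] then N else N'))%N.
    under eq_bigr do rewrite -sum1_count big_mkcond /=.
    rewrite exchange_big /= big_seq [RHS]big_seq; apply: eq_bigr => x xS.
    have [_ /(latdivP _ pr) [z ->]] := S1 x xS.
    have eqb W : `[< MW B0 W (phi p B0 z) >] = (red p z <= W)%MS.
      by apply/asboolP/idP => /(MW_phi pr B0u).
    under eq_bigr do rewrite eqb.
    rewrite -big_mkcondr /=.
    have -> : (\sum_(W in SW | (red p z <= W)%MS) 1 = #|subsp (red p z) k|)%N.
      rewrite -sum1_card; apply: eq_bigl => W; rewrite !inE sub0mx andbT.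
      by rewrite andbA.
    have -> : `[< lattice_of B0 (phi p B0 z) >] = (red p z == 0).
      by apply/asboolP/eqP => /(LphiP pr B0u).
    case: eqP => [->|/eqP nz].
      by rewrite card_subsp0 ?card_Fp // (leq_trans _ (leq_subr 1 n)); case/andP: kr.
    by rewrite card_subsp1 // card_Fp.
  by rewrite cnt sum_ite -Et -Ept'.
have PE : \sum_(W in SW) EM (MW B0 W) =
    N'%:R *: (E \Po (p%:R *: 'X)) + (N%:R - N'%:R) *: E.
  apply: poly_eq_nat => t; rewrite ev hornerD !hornerZ horner_comp hornerZ hornerX.
  by rewrite natrM.
rewrite LHSE PE; split => // l _.
rewrite coefD !coefZ coef_comp_scale natrB ?expn_gt0 ?prime_gt0 // natrX; ring.
Qed.
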